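(* Suppose $\mathcal{F}=\{X;f_\lambda\mid\lambda\in\Lambda\}$ is a minimal IFS on an infinite compact metric space $X$ and $\mathcal{F}$ has some non-periodic regularly recurrent point. If $l,n\in NM(\mathcal{F})$ and $l$ is a multiple of $n$, then $C_l$ refines $C_n$ (every element of $C_l$ is contained in some element of $C_n$).
   Context: $\Lambda$ is a finite nonempty set, $f_\lambda:X\to X$ continuous. $\Lambda^{\mathbb{Z}_+}$ is the set of sequences $\sigma=(\lambda_1,\lambda_2,\dots)$ in $\Lambda$, $\mathcal{F}_{\sigma_n}=f_{\lambda_n}\circ\cdots\circ f_{\lambda_1}$, $\mathcal{F}_{\sigma_0}=\mathrm{id}$. A nonempty closed $M\subseteq X$ is $\mathcal{F}^n$-minimal if $\mathcal{F}_{\sigma_n}(M)=M$ for all $\sigma$ and $\mathcal{F}_{\sigma_n}(A)\ne A$ for every nonempty proper $A\subsetneq M$ and every $\sigma$. $\mathcal{F}$ is minimal if the only $\mathcal{F}^1$-minimal set is $X$. $NM(\mathcal{F})$ is the set of positive integers $i$ such that some subset $M\subseteq X$ is $\mathcal{F}^i$-minimal but not $\mathcal{F}^j$-minimal for $j=1,\dots,i-1$. For $n\in NM(\mathcal{F})$, $C_n$ denotes the (unique) cover of $X$ consisting of $n$ pairwise disjoint $\mathcal{F}^n$-minimal sets. A point $x$ is regularly recurrent if for every neighborhood $U$ of $x$ there is $n\ge1$ with $\mathcal{F}_{\sigma_{ni}}(x)\in U$ for all $i\ge0$ and all $\sigma$. A point is periodic if some finite composition $f_{\lambda_n}\circ\cdots\circ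 f_{\lambda_1}$ fixes it. *)

(* Defs.v *)
From Stdlib Require Import Reals List.
Open Scope R_scope.

Definition set_eq {T : Type} (A B : T -> Prop) : Prop := forall x, A x <-> B x.
Definition subset {T : Type} (A B : T -> Prop) : Prop := forall x, A x -> B x.
Definition image {T : Type} (f : T -> T) (A : T -> Prop) : T -> Prop :=
  fun y => exists x, A x /\ f x = y.

Section Metric.
Variable X : Metric_Space.

Definition ball (x : Base X) (e : R) : Base X -> Prop := fun y => dist X x y < e.

Definition is_open (U : Base X -> Prop) : Prop :=
  forall x, U x -> exists e, e > 0 /\ subset (ball x e) U.

Definition is_closed (A : Base X -> Prop) : Prop := is_open (fun x => ~ A x).

Definition neighborhood (U : Base X -> Prop) (x : Base X) : Prop :=
  exists e, e > 0 /\ subset (ball x e) U.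

Definition compact_space : Prop :=
  forall (I : Type) (U : I -> Base X -> Prop),
    (forall i, is_open (U i)) -> (forall x, exists i, U i x) ->
    exists l : list I, forall x, exists i, In i l /\ U i x.

Definition infinite_space : Prop :=
  ~ exists l : list (Base X), forall x, In x l.

Definition continuous_map (f : Base X -> Base X) : Prop :=
  forall x e, e > 0 -> exists d, d > 0 /\
    forall y, dist X x y < d -> dist X (f x) (f y) < e.

(* IFS with maps f : Lam -> X -> X; a sequence sigma = (lambda_1, lambda_2, ...)
   is encoded as sigma : nat -> Lam with sigma k = lambda_{k+1}. *)
Variable Lam : Type.
Variable f : Lam -> Base X -> Base X.

Fixpoint comp (sigma : nat -> Lam) (n : nat) : Base X -> Base X :=
  match n with
  | O => fun x => x
  | S k => fun x => f (sigma k) (comp sigma k x)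
  end.

Definition nminimal (n : nat) (M : Base X -> Prop) : Prop :=
  (exists x, M x) /\ is_closed M /\
  (forall sigma, set_eq (image (comp sigma n) M) M) /\
  (forall A : Base X -> Prop,
     (exists x, A x) -> is_closed A -> subset A M -> ~ set_eq A M ->
     forall sigma, ~ set_eq (image (comp sigma n) A) A).

Definition minimal_IFS : Prop :=
  forall M, nminimal 1 M <-> (forall x, M x).

Definition in_NM (i : nat) : Prop :=
  (i >= 1)%nat /\
  exists M, nminimal i M /\ forall j, (1 <= j)%nat -> (j <= i - 1)%nat -> ~ nminimal j M.

Definition minimal_cover (n : nat) (C : nat -> Base X -> Prop) : Prop :=
  (forall i, (i < n)%nat -> nminimal n (C i)) /\
  (forall i j, (i < n)%nat -> (j < n)%nat -> i <> j ->
     forall x, C i x -> C j x -> False) /\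
  (forall x, exists i, (i < n)%nat /\ C i x).

Definition regularly_recurrent (x : Base X) : Prop :=
  forall U, neighborhood U x ->
    exists n, (n >= 1)%nat /\ forall i sigma, U (comp sigma (n * i) x).

Definition periodic (x : Base X) : Prop :=
  exists sigma n, (n >= 1)%nat /\ comp sigma n x = x.

End Metric.

(* Main.v *)
Require Import Defs.
From Stdlib Require Import Reals List Classical Arith Lia.

Lemma comp_add (X : Metric_Space) (Lam : Type) (f : Lam -> Base X -> Base X)
  sigma a b x :
  Defs.comp X Lam f sigma (a + b) x = Defs.comp X Lam f (fun k => sigma (a + k)%nat) b (Defs.comp X Lam f sigma a x).
Proof.
  induction b as [|b IH]; simpl.
  - rewrite Nat.add_0_r; reflexivity.
  - rewrite Nat.add_succ_r; simpl. rewrite IH. reflexivity.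
Qed.

Lemma closed_inter (X : Metric_Space) (A B : Base X -> Prop) :
  is_closed X A -> is_closed X B -> is_closed X (fun x => A x /\ B x).
Proof.
  unfold is_closed, is_open. intros HA HB x Hx.
  destruct (classic (A x)) as [Ax|nAx].
  - assert (nBx : ~ B x) by tauto.
    destruct (HB x nBx) as [e [He Hs]]. exists e; split; auto.
    intros y Hy [_ By]. exact (Hs y Hy By).
  - destruct (HA x nAx) as [e [He Hs]]. exists e; split; auto.
    intros y Hy [Ay _]. exact (Hs y Hy Ay).
Qed.

Theorem lemma4p3
  (X : Metric_Space) (Lam : Type) (f : Lam -> Base X -> Base X)
  (HLfin : exists l : list Lam, forall a, In a l)
  (HLne : inhabited Lam)
  (Hcont : forall a, continuous_map X (f a))
  (Hcpt : compact_space X)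
  (Hinf : infinite_space X)
  (Hmin : minimal_IFS X Lam f)
  (Hrr : exists x, regularly_recurrent X Lam f x /\ ~ periodic X Lam f x)
  (l n : nat)
  (Hl : in_NM X Lam f l) (Hn : in_NM X Lam f n)
  (Hdiv : exists k, l = (k * n)%nat)
  (Cl Cn : nat -> Base X -> Prop)
  (HCl : minimal_cover X Lam f l Cl) (HCn : minimal_cover X Lam f n Cn) :
  forall i, (i < l)%nat -> exists j, (j < n)%nat /\ subset (Cl i) (Cn j).
Proof.
  intros i Hi.
  destruct Hdiv as [k ->].
  destruct HCn as [HnM [Hdisj Hcov]].
  assert (Hinv : forall j, (j < n)%nat -> forall m sigma x, Cn j x ->
            Cn j (Defs.comp X Lam f sigma (m * n) x)).
  { intros j Hj m. induction m as [|m IH]; intros sigma x Hx; simpl.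
    - exact Hx.
    - replace (n + m * n)%nat with (m * n + n)%nat by lia.
      rewrite comp_add.
      destruct (HnM j Hj) as [_ [_ [Himg _]]].
      apply (proj1 (Himg (fun q => sigma (m * n + q)%nat) _)).
      exists (Defs.comp X Lam f sigma (m * n) x). split; auto. }
  destruct HCl as [HlM _].
  destruct (HlM i Hi) as [[x0 Hx0] [HclM [HimgM HminM]]].
  destruct (Hcov x0) as [j [Hj Hx0j]].
  exists j. split; auto.
  destruct (HnM j Hj) as [_ [Hclj _]].
  destruct (classic (set_eq (fun x => Cl i x /\ Cn j x) (Cl i))) as [Heq|Hne].
  - intros x Hx. apply (proj2 (Heq x) Hx).
  - exfalso. destruct HLne as [a].
    apply (HminM (fun x => Cl i x /\ Cn j x) (ex_intro _ x0 (conj Hx0 Hx0j))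
             (closed_inter X _ _ HclM Hclj) (fun x H => proj1 H) Hne (fun _ => a)).
    intro y; split.
    + intros [x [[Hx1 Hx2] <-]]. split.
      * apply (proj1 (HimgM (fun _ => a) _)). exists x; auto.
      * apply Hinv; auto.
    + intros [Hy1 Hy2].
      destruct (proj2 (HimgM (fun _ => a) y) Hy1) as [x [Hx Hxy]].
      exists x. split; auto. split; auto.
      destruct (Hcov x) as [j' [Hj' Hxj']].
      destruct (Nat.eq_dec j' j) as [->|Hd]; auto.
      exfalso. apply (Hdisj j' j Hj' Hj Hd y); auto.
      rewrite <- Hxy. apply Hinv; auto.
Qed.
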